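(* For all processes $s,t$, $\mathbf{d}_T(s,t)=\sup_{\Psi\in\mathcal{L}^d}\left|[\![\Psi]\!](s)-[\![\Psi]\!](t)\right|$, where $[\![\Psi]\!](u)=1-D(\Psi,\mathcal{L}(u))$.
   Context: PTS $(\mathcal{S},A,\to)$ with finitely supported distributions; processes image-finite and finite. Computations $c=s_0\xrightarrow{a_1}\cdots\xrightarrow{a_n}s_n$ via transitions $s_{i-1}\xrightarrow{a_i}\pi_i$, $s_i\in\mathrm{supp}(\pi_i)$; $\Pr(c)=\prod\pi_i(s_i)$; $|c|=n$; $\mathrm{tr}(c)=a_1\cdots a_n$; maximal = not a proper prefix of another computation from the same process; $\mathcal{C}_{\max}(z)$, $\mathcal{C}_{\max}(z,\alpha)$ those with trace $\alpha$; $\Pr$ of a set is the sum. A resolution of $s$ is a PTS $\mathcal{Z}=(Z,A,\to_{\mathcal{Z}})$ with $\mathrm{corr}\colon Z\to\mathcal{S}$ and initial state $z_s$, $\mathrm{corr}(z_s)=s$, such that $z_s$ is in no target support, every other state is in the support of a target of a transition from a different state, every $z\xrightarrow{a}_{\mathcal{Z}}\pi$ is matched by $\mathrm{corr}(z)\xrightarrow{a}\pi'$ with $\pi(z')=\pi'(\mathrm{corr}(z'))$, and each state has at most one outgoing transition; $\mathrm{res}(s)$ the set of resolutions. $TD_{\mathcal{Z}}(\alpha)=\Pr(\mathcal{C}_{\max}(z,\alpha))$. Kantorovich lifting $\mathcal{K}(d)(\pi,\pi')=\min_\omega\sum\omega(x,y)d(x,y)$ over couplings; Hausdorff lifting $\mathcal{H}(\hat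 d)(X,Y)=\max\{\sup_{x\in X}\inf_{y\in Y}\hat d(x,y),\sup_{y\in Y}\inf_{x\in X}\hat d(y,x)\}$ ($\inf\emptyset=1$, $\sup\emptyset=0$). $d_T(\alpha,\beta)=0$ if $\alpha=\beta$ else $1$; $D_T(\mathcal{Z}_1,\mathcal{Z}_2)=\mathcal{K}(d_T)(TD_{\mathcal{Z}_1},TD_{\mathcal{Z}_2})$; strong trace metric $\mathbf{d}_T(s,t)=\mathcal{H}(D_T)(\mathrm{res}(s),\mathrm{res}(t))$. Logic: trace formulae $\Phi::=\top\mid\langle a\rangle\Phi$, $\mathrm{depth}(\top)=0$, $\mathrm{depth}(\langle a\rangle\Phi)=1+\mathrm{depth}(\Phi)$; $\mathcal{L}^d$ is the set of trace distribution formulae $\bigoplus_{i\in I}r_i\Phi_i$ ($I$ finite nonempty, $\Phi_i$ pairwise distinct, $r_i\in(0,1]$, $\sum r_i=1$), identified with distributions on trace formulae. $c\models\top$ always; $c\models\langle a\rangle\Phi$ iff $c=s\xrightarrow{a}c'$ with $c'\models\Phi$. $s\models\bigoplus_i r_i\Phi_i$ iff some $\mathcal{Z}\in\mathrm{res}(s)$ with initial state $z$ satisfies $\Pr(\{c\in\mathcal{C}_{\max}(z):c\models\Phi_i,|c|=\mathrm{depth}(\Phi_i)\})=r_i$ for all $i$; $\mathcal{L}(s)$ the set of formulae in $\mathcal{L}^d$ satisfied by $s$. $d(\Phi_1,\Phi_2)=0$ if equal, else 1; $D=\mathcal{K}(d)$ on $\mathcal{L}^d$; $D(\Psi,\mathcal{L}')=\inf_{\Psi'\in\mathcal{L}'}D(\Psi,\Psi')$.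 *)

(* Defs.v *)
From Stdlib Require Import Reals List Classical ClassicalEpsilon ClassicalDescription.
Import ListNotations.
Open Scope R_scope.
Set Implicit Arguments.

Definition lsum {X : Type} (f : X -> R) (l : list X) : R :=
  fold_right (fun x acc => f x + acc) 0 l.

Definition indic (P : Prop) : R :=
  if excluded_middle_informative P then 1 else 0.

(** supremum of a set of reals; sup of the empty set is 0 *)
Definition Rsup (E : R -> Prop) : R :=
  match excluded_middle_informative (bound E /\ exists x, E x) with
  | left H => proj1_sig (completeness E (proj1 H) (proj2 H))
  | right _ => 0
  end.

(** infimum of a set of reals; inf of the empty set is 1 *)
Definition Rinf (E : R -> Prop) : R :=
  if excluded_middle_informative (exists x, E x)
  then - Rsup (fun y => E (- y)) else 1.

(** sum of f over a finite set given as a predicate (0 if the set is not finite) *)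
Definition fsum {X : Type} (P : X -> Prop) (f : X -> R) : R :=
  match excluded_middle_informative
          (exists l : list X, NoDup l /\ forall x, In x l <-> P x) with
  | left H => lsum f (proj1_sig (constructive_indefinite_description _ H))
  | right _ => 0
  end.

Record fdist (X : Type) := {
  pmf : X -> R;
  fsupp : list X;
  pmf_nonneg : forall x, 0 <= pmf x;
  fsupp_nodup : NoDup fsupp;
  fsupp_spec : forall x, pmf x <> 0 -> In x fsupp;
  pmf_sum : lsum pmf fsupp = 1 }.

Record pts (A : Type) := {
  st : Type;
  trans : st -> A -> fdist st -> Prop }.

(** A computation from s is represented by its list of steps (a_i, pi_i, s_i),
    meaning s_{i-1} --a_i--> pi_i and s_i in supp(pi_i). *)
Definition steps (A S : Type) := list (A * fdist S * S).

Fixpoint valid {A : Type} (P : pts A) (s : st P) (c : steps A (st P)) : Prop :=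
  match c with
  | [] => True
  | (a, pi, s') :: c' => trans P s a pi /\ 0 < pmf pi s' /\ valid P s' c'
  end.

Definition Prc {A S : Type} (c : steps A S) : R :=
  fold_right (fun stp acc => let '(_, pi, s') := stp in pmf pi s' * acc) 1 c.

Definition trace {A S : Type} (c : steps A S) : list A :=
  map (fun stp => fst (fst stp)) c.

Definition maximal {A : Type} (P : pts A) (s : st P) (c : steps A (st P)) : Prop :=
  valid P s c /\ ~ (exists ext, ext <> [] /\ valid P s (c ++ ext)).

Definition Cmax {A : Type} (P : pts A) (s : st P) (alpha : list A)
  (c : steps A (st P)) : Prop :=
  maximal P s c /\ trace c = alpha.

Definition last_state {A S : Type} (s : S) (c : steps A S) : S :=
  fold_left (fun _ stp => snd stp) c s.

Definition reachable {A : Type} (P : pts A) (s u : st P) : Prop :=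
  exists c, valid P s c /\ last_state s c = u.

Definition image_finite {A : Type} (P : pts A) (s : st P) : Prop :=
  forall u, reachable P s u -> forall a : A,
    exists l : list (fdist (st P)), forall pi, trans P u a pi -> In pi l.

Definition finite_proc {A : Type} (P : pts A) (s : st P) : Prop :=
  exists N : nat, forall c, valid P s c -> (length c <= N)%nat.

Record resolution {A : Type} (P : pts A) (s : st P) := {
  rpts : pts A;
  corr : st rpts -> st P;
  rinit : st rpts;
  r_corr_init : corr rinit = s;
  r_init_fresh : forall z a pi, trans rpts z a pi -> ~ (0 < pmf pi rinit);
  r_reach : forall z', z' <> rinit ->
      exists z a pi, z <> z' /\ trans rpts z a pi /\ 0 < pmf pi z';
  r_match : forall z a pi, trans rpts z a pi ->
      exists pi', trans P (corr z) a pi' /\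
                  forall z', pmf pi z' = pmf pi' (corr z');
  r_det : forall z a1 pi1 a2 pi2,
      trans rpts z a1 pi1 -> trans rpts z a2 pi2 -> a1 = a2 /\ pi1 = pi2 }.

Arguments rpts {A P s}.
Arguments corr {A P s}.
Arguments rinit {A P s}.

Definition TD {A : Type} {P : pts A} {s : st P} (Z : resolution P s)
  (alpha : list A) : R :=
  fsum (Cmax (rpts Z) (rinit Z) alpha) Prc.

Definition kantorovich {X : Type} (d : X -> X -> R) (mu nu : X -> R) : R :=
  Rinf (fun v => exists w : fdist (X * X),
    (forall x, mu x = lsum (fun p => pmf w p * indic (fst p = x)) (fsupp w)) /\
    (forall y, nu y = lsum (fun p => pmf w p * indic (snd p = y)) (fsupp w)) /\
    v = lsum (fun p => pmf w p * d (fst p) (snd p)) (fsupp w)).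

Definition hausdorff {X Y : Type} (d1 : X -> Y -> R) (d2 : Y -> X -> R) : R :=
  Rmax (Rsup (fun v => exists x, v = Rinf (fun u => exists y, u = d1 x y)))
       (Rsup (fun v => exists y, v = Rinf (fun u => exists x, u = d2 y x))).

Definition dtr {A : Type} (alpha beta : list A) : R :=
  if excluded_middle_informative (alpha = beta) then 0 else 1.

Definition DT {A : Type} {P : pts A} {s t : st P}
  (Z1 : resolution P s) (Z2 : resolution P t) : R :=
  kantorovich dtr (TD Z1) (TD Z2).

Definition dT {A : Type} (P : pts A) (s t : st P) : R :=
  hausdorff (fun (Z1 : resolution P s) (Z2 : resolution P t) => DT Z1 Z2)
            (fun (Z2 : resolution P t) (Z1 : resolution P s) => DT Z2 Z1).

Inductive tform (A : Type) :=
| TTop : tform A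
| TDiam : A -> tform A -> tform A.
Arguments TTop {A}.

Fixpoint depth {A : Type} (phi : tform A) : nat :=
  match phi with TTop => 0%nat | TDiam _ phi' => S (depth phi') end.

Fixpoint csat {A S : Type} (c : steps A S) (phi : tform A) : Prop :=
  match phi, c with
  | TTop, _ => True
  | TDiam a phi', (a', _, _) :: c' => a' = a /\ csat c' phi'
  | TDiam _ _, [] => False
  end.

Record ldform (A : Type) := {
  lterms : list (R * tform A);
  lterms_nodup : NoDup (map snd lterms);
  lterms_pos : forall p, In p lterms -> 0 < fst p <= 1;
  lterms_sum : lsum fst lterms = 1 }.

Definition ldist {A : Type} (Psi : ldform A) (phi : tform A) : R :=
  lsum (fun p => fst p * indic (snd p = phi)) (lterms Psi).

Definition lsat {A : Type} (P : pts A) (s : st P) (Psi : ldform A) : Prop :=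
  exists Z : resolution P s, forall p, In p (lterms Psi) ->
    fsum (fun c => maximal (rpts Z) (rinit Z) c /\ csat c (snd p) /\
                   length c = depth (snd p)) Prc = fst p.

Definition Lset {A : Type} (P : pts A) (s : st P) : ldform A -> Prop := lsat P s.

Definition dform {A : Type} (phi1 phi2 : tform A) : R :=
  if excluded_middle_informative (phi1 = phi2) then 0 else 1.

Definition Dl {A : Type} (Psi1 Psi2 : ldform A) : R :=
  kantorovich dform (ldist Psi1) (ldist Psi2).

Definition DlSet {A : Type} (Psi : ldform A) (L : ldform A -> Prop) : R :=
  Rinf (fun v => exists Psi', L Psi' /\ v = Dl Psi Psi').

Definition sem {A : Type} (P : pts A) (Psi : ldform A) (u : st P) : R :=
  1 - DlSet Psi (Lset P u).

(* Main.v *)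
Require Import Defs.
From Stdlib Require Import Reals List Lra Lia Permutation Classical ClassicalEpsilon ClassicalDescription FunctionalExtensionality PropExtensionality.
Import ListNotations.
Open Scope R_scope.
Arguments lsum {X} f l : simpl never.

Lemma lsum_nil {X} (f : X -> R) : lsum f [] = 0. Proof. reflexivity. Qed.
Lemma lsum_cons {X} (f : X -> R) x l : lsum f (x :: l) = f x + lsum f l. Proof. reflexivity. Qed.

Lemma lsum_app {X} (f : X -> R) l1 l2 : lsum f (l1 ++ l2) = lsum f l1 + lsum f l2.
Proof. induction l1; simpl. rewrite lsum_nil; lra. rewrite !lsum_cons, IHl1; lra. Qed.

Lemma lsum_map {X Y} (f : Y -> R) (g : X -> Y) l : lsum f (map g l) = lsum (fun x => f (g x)) l.
Proof. induction l; simpl; auto. rewrite !lsum_cons, IHl; auto. Qed.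

Lemma lsum_ext_in {X} (f g : X -> R) l : (forall x, In x l -> f x = g x) -> lsum f l = lsum g l.
Proof. induction l; intros H; simpl; auto. rewrite !lsum_cons, (H a) by (simpl; auto). rewrite IHl; auto. intros; apply H; simpl; auto. Qed.

Lemma lsum_le_in {X} (f g : X -> R) l : (forall x, In x l -> f x <= g x) -> lsum f l <= lsum g l.
Proof. induction l; intros H; simpl. rewrite !lsum_nil; lra. rewrite !lsum_cons.
  assert (f a <= g a) by (apply H; simpl; auto). assert (lsum f l <= lsum g l) by (apply IHl; intros; apply H; simpl; auto). lra. Qed.

Lemma lsum_plus {X} (f g : X -> R) l : lsum (fun x => f x + g x) l = lsum f l + lsum g l.
Proof. induction l; simpl. rewrite !lsum_nil; lra. rewrite !lsum_cons, IHl; lra. Qed.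

Lemma lsum_minus {X} (f g : X -> R) l : lsum (fun x => f x - g x) l = lsum f l - lsum g l.
Proof. induction l; simpl. rewrite !lsum_nil; lra. rewrite !lsum_cons, IHl; lra. Qed.

Lemma lsum_scal {X} (c : R) (f : X -> R) l : lsum (fun x => c * f x) l = c * lsum f l.
Proof. induction l; simpl. rewrite !lsum_nil; lra. rewrite !lsum_cons, IHl; lra. Qed.

Lemma lsum_scal_r {X} (c : R) (f : X -> R) l : lsum (fun x => f x * c) l = lsum f l * c.
Proof. induction l; simpl. rewrite !lsum_nil; lra. rewrite !lsum_cons, IHl; lra. Qed.

Lemma lsum_const0 {X} (l : list X) : lsum (fun _ => 0) l = 0.
Proof. induction l; auto. rewrite lsum_cons, IHl; lra. Qed.

Lemma lsum_nonneg {X} (f : X -> R) l : (forall x, In x l -> 0 <= f x) -> 0 <= lsum f l.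
Proof. intros H. rewrite <- (lsum_const0 l). apply lsum_le_in; auto. Qed.

Lemma lsum_swap {X Y} (f : X -> Y -> R) l1 l2 :
  lsum (fun x => lsum (fun y => f x y) l2) l1 = lsum (fun y => lsum (fun x => f x y) l1) l2.
Proof. induction l1; simpl.
  - rewrite lsum_nil. symmetry. apply lsum_const0.
  - rewrite lsum_cons, IHl1. rewrite <- lsum_plus. apply lsum_ext_in. intros; rewrite lsum_cons; auto. Qed.

Lemma lsum_perm {X} (f : X -> R) l l' : Permutation l l' -> lsum f l = lsum f l'.
Proof. induction 1; auto. rewrite !lsum_cons, IHPermutation; auto. rewrite !lsum_cons; lra. congruence. Qed.

Lemma lsum_single {X} (f : X -> R) l x : (forall y, In y l -> 0 <= f y) -> In x l -> f x <= lsum f l.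
Proof. induction l; simpl; intros H Hx. destruct Hx. rewrite lsum_cons. destruct Hx as [->|Hx].
  - assert (0 <= lsum f l) by (apply lsum_nonneg; auto). lra.
  - assert (0 <= f a) by auto. assert (f x <= lsum f l) by auto. lra. Qed.

Lemma lsum_zero_each {X} (f : X -> R) l : (forall y, In y l -> 0 <= f y) -> lsum f l = 0 -> forall x, In x l -> f x = 0.
Proof. intros H Hs x Hx. pose proof (lsum_single f l x H Hx). pose proof (H x Hx). lra. Qed.

Lemma indic_T (P : Prop) : P -> indic P = 1.
Proof. intros; unfold indic; destruct excluded_middle_informative; tauto. Qed.
Lemma indic_F (P : Prop) : ~ P -> indic P = 0.
Proof. intros; unfold indic; destruct excluded_middle_informative; tauto. Qed.
Lemma indic_01 (P : Prop) : 0 <= indic P <= 1.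
Proof. unfold indic; destruct excluded_middle_informative; lra. Qed.
Lemma indic_iff (P Q : Prop) : (P <-> Q) -> indic P = indic Q.
Proof. intros H; unfold indic; do 2 destruct excluded_middle_informative; tauto. Qed.
Lemma indic_sym {X} (x y : X) : indic (x = y) = indic (y = x).
Proof. apply indic_iff; split; auto. Qed.

Lemma lsum_indic_in {X} (f : X -> R) l y : NoDup l -> In y l ->
  lsum (fun x => f x * indic (x = y)) l = f y.
Proof. induction l; simpl; intros Hn Hy; [destruct Hy|]. inversion Hn; subst. rewrite lsum_cons.
  destruct Hy as [->|Hy].
  - rewrite indic_T by auto. rewrite (lsum_ext_in _ (fun _ => 0)). rewrite lsum_const0; lra.
    intros x Hx. rewrite indic_F. lra. intros ->; auto.
  - rewrite IHl by auto. rewrite indic_F. lra. intros ->; auto. Qed.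

Lemma lsum_indic_out {X} (f : X -> R) l y : ~ In y l ->
  lsum (fun x => f x * indic (x = y)) l = 0.
Proof. intros H. rewrite (lsum_ext_in _ (fun _ => 0)). apply lsum_const0.
  intros x Hx. rewrite indic_F. lra. intros ->; auto. Qed.

Lemma lsum_indic_le1 {X} l (y : X) : NoDup l -> lsum (fun x => indic (y = x)) l <= 1.
Proof. intros Hn. destruct (classic (In y l)).
  - rewrite (lsum_ext_in _ (fun x => 1 * indic (x = y))). rewrite lsum_indic_in; auto; lra.
    intros; rewrite indic_sym; ring.
  - rewrite (lsum_ext_in _ (fun x => 1 * indic (x = y))). rewrite lsum_indic_out; auto; lra.
    intros; rewrite indic_sym; ring. Qed.

Definition fpd {X} (mu : X -> R) (L : list X) : Prop :=
  NoDup L /\ (forall x, 0 <= mu x) /\ (forall x, ~ In x L -> mu x = 0) /\ lsum mu L = 1.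

Lemma lsum_via {X} (mu : X -> R) L L' : NoDup L -> (forall x, ~ In x L -> mu x = 0) ->
  lsum mu L' = lsum (fun y => mu y * lsum (fun x => indic (y = x)) L') L.
Proof. intros Hn H0. transitivity (lsum (fun x => lsum (fun y => mu y * indic (y = x)) L) L').
  - apply lsum_ext_in. intros x _. destruct (classic (In x L)).
    + rewrite lsum_indic_in; auto.
    + rewrite lsum_indic_out; auto.
  - rewrite lsum_swap. apply lsum_ext_in. intros; rewrite <- lsum_scal; auto. Qed.

Lemma lsum_incl {X} (mu : X -> R) L L' : NoDup L -> NoDup L' -> incl L L' -> (forall x, ~ In x L -> mu x = 0) ->
  lsum mu L' = lsum mu L.
Proof. intros Hn Hn' Hi H0. rewrite (lsum_via mu L L'); auto. apply lsum_ext_in. intros y Hy.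
  rewrite (lsum_ext_in _ (fun x => 1 * indic (x = y))). rewrite lsum_indic_in; auto. ring.
  intros; rewrite indic_sym; ring. Qed.

Lemma lsum_le_fpd {X} (mu : X -> R) L L' : fpd mu L -> NoDup L' -> lsum mu L' <= 1.
Proof. intros (Hn & Hp & H0 & Hs) Hn'. rewrite (lsum_via mu L L'); auto. rewrite <- Hs.
  apply lsum_le_in. intros y _. pose proof (lsum_indic_le1 L' y Hn'). pose proof (Hp y).
  assert (mu y * lsum (fun x => indic (y = x)) L' <= mu y * 1) by (apply Rmult_le_compat_l; auto). lra. Qed.

Lemma fpd_incl {X} (mu : X -> R) L L' : fpd mu L -> NoDup L' -> incl L L' -> fpd mu L'.
Proof. intros (Hn & Hp & H0 & Hs) Hn' Hi. split; [auto|split;[auto|split]].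
  intros x Hx; apply H0; intro; apply Hx; auto. rewrite (lsum_incl mu L L'); auto. Qed.

Lemma single_le1 {X} (mu : X -> R) L x : fpd mu L -> mu x <= 1.
Proof. intros H. pose proof (lsum_le_fpd mu L [x] H). rewrite lsum_cons, lsum_nil in H0.
  assert (mu x + 0 <= 1) by (apply H0; constructor; auto; constructor). lra. Qed.
Lemma Rsup_spec (E : R -> Prop) : bound E -> (exists x, E x) -> is_lub E (Rsup E).
Proof. intros Hb He. unfold Rsup. destruct excluded_middle_informative as [H|H].
  - destruct (completeness E (proj1 H) (proj2 H)) as [m Hm]; simpl; auto.
  - exfalso; tauto. Qed.

Lemma Rsup_ub (E : R -> Prop) x : bound E -> E x -> x <= Rsup E.
Proof. intros Hb Hx. destruct (Rsup_spec E Hb (ex_intro _ x Hx)) as [H1 _]. apply H1; auto. Qed.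

Lemma Rsup_le (E : R -> Prop) M : (forall x, E x -> x <= M) -> 0 <= M -> Rsup E <= M.
Proof. intros H H0. unfold Rsup. destruct excluded_middle_informative as [Hb|Hb].
  - destruct (completeness E (proj1 Hb) (proj2 Hb)) as [m [Hm0 Hm]]; simpl. apply Hm. intros x Hx; apply H; auto.
  - auto. Qed.

Lemma Rsup_nonneg (E : R -> Prop) : (forall x, E x -> 0 <= x) -> 0 <= Rsup E.
Proof. intros H. unfold Rsup. destruct excluded_middle_informative as [Hb|Hb].
  - destruct (completeness E (proj1 Hb) (proj2 Hb)) as [m [Hm Hm0]]; simpl.
    destruct (proj2 Hb) as [x Hx]. pose proof (H x Hx). pose proof (Hm x Hx). lra.
  - lra. Qed.

Lemma Rinf_lb (E : R -> Prop) x : (forall y, E y -> 0 <= y) -> E x -> Rinf E <= x.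
Proof. intros H0 Hx. unfold Rinf. destruct excluded_middle_informative as [He|He]; [|exfalso; eauto].
  assert (Hb : bound (fun y => E (- y))). { exists 0. intros y Hy. pose proof (H0 _ Hy). lra. }
  assert (E (- - x)) by (rewrite Ropp_involutive; auto).
  pose proof (Rsup_ub (fun y => E (- y)) (- x) Hb H). lra. Qed.

Lemma Rinf_glb (E : R -> Prop) m : (forall y, E y -> m <= y) -> m <= 1 -> m <= Rinf E.
Proof. intros H H1. unfold Rinf. destruct excluded_middle_informative as [He|He]; [|auto].
  destruct He as [x Hx].
  assert (Hb : bound (fun y => E (- y))). { exists (- m). intros y Hy. pose proof (H _ Hy). lra. }
  assert (E (- - x)) by (rewrite Ropp_involutive; auto).
  destruct (Rsup_spec _ Hb (ex_intro _ _ H0)) as [_ Hl].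
  assert (Rsup (fun y => E (- y)) <= - m). { apply Hl. intros y Hy. pose proof (H _ Hy). lra. }
  lra. Qed.

Lemma Rinf_01 (E : R -> Prop) : (forall y, E y -> 0 <= y <= 1) -> 0 <= Rinf E <= 1.
Proof. intros H. split.
  - apply Rinf_glb; [intros y Hy; apply H; auto| lra].
  - destruct (classic (exists x, E x)) as [[x Hx]|Hn].
    + pose proof (Rinf_lb E x (fun y Hy => proj1 (H y Hy)) Hx). pose proof (H x Hx). lra.
    + unfold Rinf. destruct excluded_middle_informative; [tauto| lra]. Qed.

Lemma Rinf_eq (E : R -> Prop) v : E v -> (forall y, E y -> v <= y) -> 0 <= v -> v <= 1 -> Rinf E = v.
Proof. intros Hv H H0 H1. apply Rle_antisym.
  - apply Rinf_lb; auto. intros y Hy; pose proof (H y Hy); lra.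
  - apply Rinf_glb; auto. Qed.
Definition dd {X} (x y : X) : R := if excluded_middle_informative (x = y) then 0 else 1.
Lemma dd_ind {X} (x y : X) : dd x y = 1 - indic (x = y).
Proof. unfold dd, indic; destruct excluded_middle_informative; lra. Qed.

Lemma lsum_prod {X Y} (f : X * Y -> R) L1 L2 :
  lsum f (list_prod L1 L2) = lsum (fun x => lsum (fun y => f (x, y)) L2) L1.
Proof. induction L1; simpl. rewrite !lsum_nil; auto. rewrite lsum_app, lsum_map, IHL1, lsum_cons; auto. Qed.

Lemma NoDup_prod {X Y} (L1 : list X) (L2 : list Y) : NoDup L1 -> NoDup L2 -> NoDup (list_prod L1 L2).
Proof. induction L1; simpl; intros H1 H2. constructor. inversion H1; subst. apply NoDup_app.
  - apply FinFun.Injective_map_NoDup; auto. intros y1 y2 E; inversion E; auto.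
  - auto.
  - intros p Hp Hq. apply in_map_iff in Hp. destruct Hp as [y [<- _]]. apply in_prod_iff in Hq. tauto. Qed.

Lemma kant_lower {X} (mu nu : X -> R) L (w : fdist (X * X)) : fpd mu L -> fpd nu L ->
  (forall x, mu x = lsum (fun p => pmf w p * indic (fst p = x)) (fsupp w)) ->
  (forall y, nu y = lsum (fun p => pmf w p * indic (snd p = y)) (fsupp w)) ->
  1 - lsum (fun x => Rmin (mu x) (nu x)) L <= lsum (fun p => pmf w p * dd (fst p) (snd p)) (fsupp w).
Proof. intros (Hn & Hp & H0 & Hs) (Hn' & Hp' & H0' & Hs') Hm1 Hm2.
  set (W := fsupp w).
  assert (Hw : forall p, 0 <= pmf w p) by apply pmf_nonneg.
  rewrite (lsum_ext_in _ (fun p => pmf w p - pmf w p * indic (fst p = snd p))).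
  2:{ intros p _; rewrite dd_ind; ring. }
  rewrite lsum_minus. unfold W; rewrite pmf_sum.
  enough (lsum (fun p => pmf w p * indic (fst p = snd p)) (fsupp w) <= lsum (fun x => Rmin (mu x) (nu x)) L) by lra.
  rewrite (lsum_ext_in _ (fun p => lsum (fun x => pmf w p * indic (fst p = x) * indic (snd p = x)) L)).
  2:{ intros p Hpw. destruct (classic (In (fst p) L)) as [Hin|Hout].
      - rewrite (lsum_ext_in _ (fun x => (pmf w p * indic (snd p = x)) * indic (x = fst p))).
        2:{ intros x _. rewrite (indic_sym x). ring. }
        rewrite lsum_indic_in; auto. rewrite indic_sym; auto.
      - assert (Hz : pmf w p = 0).
        { pose proof (H0 _ Hout) as Hz. rewrite Hm1 in Hz.
          pose proof (lsum_single (fun q => pmf w q * indic (fst q = fst p)) (fsupp w) p) as Hl.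
          simpl in Hl. rewrite indic_T in Hl by auto. rewrite Hz in Hl.
          assert (pmf w p * 1 <= 0). { apply Hl; auto. intros; pose proof (Hw y); pose proof (indic_01 (fst y = fst p)); nra. }
          pose proof (Hw p). lra. }
        rewrite Hz. rewrite (lsum_ext_in _ (fun _ => 0)). rewrite lsum_const0; ring. intros; ring. }
  rewrite lsum_swap. apply lsum_le_in. intros x _. apply Rmin_glb.
  - rewrite Hm1. apply lsum_le_in. intros p _. pose proof (Hw p). pose proof (indic_01 (fst p = x)). pose proof (indic_01 (snd p = x)).
    assert (0 <= pmf w p * indic (fst p = x)) by (apply Rmult_le_pos; lra).
    assert (0 <= pmf w p * indic (snd p = x)) by (apply Rmult_le_pos; lra). nra.
  - rewrite Hm2. apply lsum_le_in. intros p _. pose proof (Hw p). pose proof (indic_01 (fst p = x)). pose proof (indic_01 (snd p = x)).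
    assert (0 <= pmf w p * indic (fst p = x)) by (apply Rmult_le_pos; lra).
    assert (0 <= pmf w p * indic (snd p = x)) by (apply Rmult_le_pos; lra). nra.
Qed.

Lemma Rmin_prod0 a b : (a - Rmin a b) * (b - Rmin a b) = 0.
Proof. unfold Rmin; destruct Rle_dec; ring. Qed.

Lemma Rmin_nonneg a b : 0 <= a -> 0 <= b -> 0 <= Rmin a b.
Proof. intros; apply Rmin_glb; auto. Qed.

Lemma kant_upper {X} (mu nu : X -> R) L : fpd mu L -> fpd nu L ->
  exists w : fdist (X * X),
  (forall x, mu x = lsum (fun p => pmf w p * indic (fst p = x)) (fsupp w)) /\
  (forall y, nu y = lsum (fun p => pmf w p * indic (snd p = y)) (fsupp w)) /\
  1 - lsum (fun x => Rmin (mu x) (nu x)) L = lsum (fun p => pmf w p * dd (fst p) (snd p)) (fsupp w).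
Proof. intros Hmu Hnu. pose proof Hmu as (Hn & Hp & H0 & Hs). pose proof Hnu as (Hn' & Hp' & H0' & Hs').
  set (m := fun x => Rmin (mu x) (nu x)).
  set (dl := 1 - lsum m L).
  set (c := / dl).
  set (L2 := list_prod L L).
  set (core := fun p : X * X => m (fst p) * indic (fst p = snd p) + c * (mu (fst p) - m (fst p)) * (nu (snd p) - m (snd p))).
  set (pw := fun p : X * X => if excluded_middle_informative (In p L2) then core p else 0).
  assert (Hm0 : forall x, 0 <= m x) by (intros; apply Rmin_nonneg; auto).
  assert (Hmm : forall x, 0 <= mu x - m x) by (intros; unfold m; pose proof (Rmin_l (mu x) (nu x)); lra).
  assert (Hmn : forall x, 0 <= nu x - m x) by (intros; unfold m; pose proof (Rmin_r (mu x) (nu x)); lra).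
  assert (Hsm : lsum (fun x => mu x - m x) L = dl) by (rewrite lsum_minus; unfold dl; lra).
  assert (Hsn : lsum (fun x => nu x - m x) L = dl) by (rewrite lsum_minus; unfold dl; lra).
  assert (Hdl : 0 <= dl) by (rewrite <- Hsm; apply lsum_nonneg; auto).
  assert (Hc : 0 <= c). { unfold c. destruct (Req_dec dl 0) as [E|E]. rewrite E, Rinv_0; lra.
      left; apply Rinv_0_lt_compat; lra. }
  assert (Hcase : forall x, In x L -> (dl = 0 /\ mu x = m x /\ nu x = m x) \/ c * dl = 1).
  { intros x Hx. destruct (Req_dec dl 0) as [E|E].
    - left. split; auto. split.
      + pose proof (lsum_zero_each (fun x => mu x - m x) L (fun y _ => Hmm y) (eq_trans Hsm E) x Hx). simpl in H; lra.
      + pose proof (lsum_zero_each (fun x => nu x - m x) L (fun y _ => Hmn y) (eq_trans Hsn E) x Hx). simpl in H; lra.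
    - right. unfold c. field; auto. }
  assert (Hrow : forall x, In x L -> lsum (fun y => core (x, y)) L = mu x).
  { intros x Hx. unfold core; simpl. rewrite lsum_plus.
    rewrite (lsum_ext_in (fun y => m x * indic (x = y)) (fun y => m x * indic (y = x))) by (intros; rewrite indic_sym; auto).
    rewrite lsum_indic_in; auto. rewrite lsum_scal, Hsn.
    destruct (Hcase x Hx) as [(E1 & E2 & E3)|E]. rewrite E1, E2; ring. rewrite Rmult_assoc, (Rmult_comm _ dl), <- Rmult_assoc, E; ring. }
  assert (Hcol : forall y, In y L -> lsum (fun x => core (x, y)) L = nu y).
  { intros y Hy. unfold core; simpl. rewrite lsum_plus.
    rewrite lsum_indic_in; auto. rewrite lsum_scal_r, lsum_scal, Hsm.
    destruct (Hcase y Hy) as [(E1 & E2 & E3)|E]. rewrite E1, E3; ring. rewrite E; ring. }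
  assert (Hpw : forall x y, In x L -> In y L -> pw (x, y) = core (x, y)).
  { intros x y Hx Hy. unfold pw. destruct excluded_middle_informative as [_|N]; auto. exfalso; apply N; apply in_prod; auto. }
  assert (Hsum2 : forall f, lsum f L2 = lsum (fun x => lsum (fun y => f (x, y)) L) L) by (intros; apply lsum_prod).
  assert (F1 : forall p, 0 <= pw p).
  { intros p. unfold pw. destruct excluded_middle_informative; [|lra]. unfold core.
    pose proof (Hm0 (fst p)). pose proof (indic_01 (fst p = snd p)). pose proof (Hmm (fst p)). pose proof (Hmn (snd p)).
    assert (0 <= c * (mu (fst p) - m (fst p))) by (apply Rmult_le_pos; auto).
    assert (0 <= c * (mu (fst p) - m (fst p)) * (nu (snd p) - m (snd p))) by (apply Rmult_le_pos; auto). nra. }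
  assert (F2 : NoDup L2) by (apply NoDup_prod; auto).
  assert (F3 : forall p, pw p <> 0 -> In p L2).
  { intros p Hp0. unfold pw in Hp0. destruct excluded_middle_informative; tauto. }
  assert (F4 : lsum pw L2 = 1).
  { rewrite Hsum2. rewrite <- Hs. apply lsum_ext_in. intros x Hx.
    rewrite (lsum_ext_in _ (fun y => core (x, y))) by (intros; apply Hpw; auto). apply Hrow; auto. }
  exists {| pmf := pw; fsupp := L2; pmf_nonneg := F1; fsupp_nodup := F2; fsupp_spec := F3; pmf_sum := F4 |}.
  simpl. split; [|split].
  - intros x0. rewrite Hsum2.
    rewrite (lsum_ext_in _ (fun x => mu x * indic (x = x0))).
    { destruct (classic (In x0 L)). rewrite lsum_indic_in; auto. rewrite lsum_indic_out; auto. }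
    intros x Hx. simpl. rewrite lsum_scal_r. rewrite <- (Hrow x Hx). f_equal. apply lsum_ext_in. intros; apply Hpw; auto.
  - intros y0. rewrite Hsum2, lsum_swap.
    rewrite (lsum_ext_in _ (fun y => nu y * indic (y = y0))).
    { destruct (classic (In y0 L)). rewrite lsum_indic_in; auto. rewrite lsum_indic_out; auto. }
    intros y Hy. simpl. rewrite lsum_scal_r. rewrite <- (Hcol y Hy). f_equal. apply lsum_ext_in. intros; apply Hpw; auto.
  - rewrite Hsum2. transitivity (lsum (fun x => mu x - m x) L).
    { rewrite lsum_minus, Hs. unfold dl, m; cbv beta; lra. }
    apply lsum_ext_in. intros x Hx. simpl. symmetry.
    rewrite (lsum_ext_in _ (fun y => core (x, y) - core (x, y) * indic (y = x))).
    2:{ intros y Hy. rewrite Hpw by auto. rewrite dd_ind, (indic_sym x). ring. }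
    rewrite lsum_minus, Hrow by auto. rewrite lsum_indic_in by auto. unfold core; simpl.
    rewrite indic_T by auto. rewrite Rmult_assoc. unfold m; rewrite Rmin_prod0. ring.
Qed.

Lemma kant_tv {X} (mu nu : X -> R) L : fpd mu L -> fpd nu L ->
  kantorovich dd mu nu = 1 - lsum (fun x => Rmin (mu x) (nu x)) L.
Proof. intros Hmu Hnu. pose proof Hmu as (Hn & Hp & H0 & Hs). pose proof Hnu as (Hn' & Hp' & H0' & Hs').
  assert (B0 : 0 <= lsum (fun x => Rmin (mu x) (nu x)) L) by (apply lsum_nonneg; intros; apply Rmin_nonneg; auto).
  assert (B1 : lsum (fun x => Rmin (mu x) (nu x)) L <= 1) by (rewrite <- Hs; apply lsum_le_in; intros; apply Rmin_l).
  unfold kantorovich. apply Rinf_eq; [| |lra|lra].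
  - destruct (kant_upper mu nu L Hmu Hnu) as [w (A1 & A2 & A3)]. exists w; auto.
  - intros y [w (A1 & A2 & ->)]. apply kant_lower; auto.
Qed.
Lemma kant_01 {X} (mu nu : X -> R) L : fpd mu L -> fpd nu L -> 0 <= kantorovich dd mu nu <= 1.
Proof. intros Hmu Hnu. rewrite (kant_tv mu nu L) by auto. pose proof Hmu as (Hn & Hp & H0 & Hs). pose proof Hnu as (Hn' & Hp' & H0' & Hs').
  assert (B0 : 0 <= lsum (fun x => Rmin (mu x) (nu x)) L) by (apply lsum_nonneg; intros; apply Rmin_nonneg; auto).
  assert (B1 : lsum (fun x => Rmin (mu x) (nu x)) L <= 1) by (rewrite <- Hs; apply lsum_le_in; intros; apply Rmin_l).
  lra. Qed.

Lemma kant_self {X} (mu : X -> R) L : fpd mu L -> kantorovich dd mu mu = 0.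
Proof. intros Hmu. rewrite (kant_tv mu mu L) by auto. pose proof Hmu as (Hn & Hp & H0 & Hs).
  rewrite (lsum_ext_in _ mu). lra. intros; unfold Rmin; destruct Rle_dec; auto. Qed.

Lemma kant_tri {X} (mu nu rho : X -> R) L : fpd mu L -> fpd nu L -> fpd rho L ->
  kantorovich dd mu rho <= kantorovich dd mu nu + kantorovich dd nu rho.
Proof. intros Hmu Hnu Hrho. rewrite !(kant_tv _ _ L) by auto. pose proof Hnu as (Hn & Hp & H0 & Hs).
  assert (lsum (fun x => Rmin (mu x) (nu x)) L + lsum (fun x => Rmin (nu x) (rho x)) L <= lsum nu L + lsum (fun x => Rmin (mu x) (rho x)) L).
  { rewrite <- !lsum_plus. apply lsum_le_in. intros x _. unfold Rmin. repeat destruct Rle_dec; lra. }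
  lra. Qed.

Lemma Prc_cons {A S} a (pi : fdist S) (z : S) (c : steps A S) : Prc ((a, pi, z) :: c) = pmf pi z * Prc c.
Proof. reflexivity. Qed.

Lemma Prc_nonneg {A S} (c : steps A S) : 0 <= Prc c.
Proof. induction c as [|[[a pi] z] c IH]. simpl; lra. rewrite Prc_cons. apply Rmult_le_pos; auto. apply pmf_nonneg. Qed.

Lemma fdist_pos {X} (pi : fdist X) : exists x, In x (fsupp pi) /\ 0 < pmf pi x.
Proof. apply NNPP. intros H. assert (lsum (pmf pi) (fsupp pi) <= lsum (fun _ => 0) (fsupp pi)).
  { apply lsum_le_in. intros x Hx. apply Rnot_lt_le. intro; apply H; eauto. }
  rewrite lsum_const0, pmf_sum in H0. lra. Qed.

Definition detp {A} (Q : pts A) := forall z a1 pi1 a2 pi2,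
  trans Q z a1 pi1 -> trans Q z a2 pi2 -> a1 = a2 /\ pi1 = pi2.

Lemma maximal_nil {A} (Q : pts A) z c : ~ (exists a pi, trans Q z a pi) -> (maximal Q z c <-> c = []).
Proof. intros H. split.
  - intros [Hv _]. destruct c as [|[[a pi] z'] c]; auto. exfalso. apply H. destruct Hv; eauto.
  - intros ->. split. simpl; auto. intros [ext [Hne Hv]]. destruct ext as [|[[a pi] z'] e]; [tauto|].
    apply H. destruct Hv; eauto. Qed.

Lemma maximal_cons {A} (Q : pts A) z a pi c : detp Q -> trans Q z a pi ->
  (maximal Q z c <-> exists z' c', c = (a, pi, z') :: c' /\ 0 < pmf pi z' /\ maximal Q z' c').
Proof. intros Hd Ht. split.
  - intros [Hv Hm]. destruct c as [|[[a1 pi1] z1] c].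
    + exfalso. apply Hm. destruct (fdist_pos pi) as [z' [_ Hz']]. exists [(a, pi, z')]. split. discriminate.
      simpl; auto.
    + destruct Hv as (Ht1 & Hp1 & Hv1). destruct (Hd _ _ _ _ _ Ht Ht1) as [<- <-].
      exists z1, c. split; auto. split; auto. split; auto.
      intros [ext [Hne Hv]]. apply Hm. exists ext. split; auto. simpl. auto.
  - intros (z' & c' & -> & Hp & Hv & Hm). split. simpl; auto.
    intros [ext [Hne Hve]]. apply Hm. exists ext. split; auto. simpl in Hve. tauto. Qed.

Lemma build_list {A} (Q : pts A) a (pi : fdist (st Q)) (Lz : list (st Q)) : NoDup Lz ->
  (forall z', In z' Lz -> exists Cs, NoDup Cs /\ (forall c, maximal Q z' c <-> In c Cs) /\ lsum Prc Cs = 1) ->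
  exists Cs, NoDup Cs /\ (forall c, In c Cs <-> exists z' c', In z' Lz /\ c = (a, pi, z') :: c' /\ maximal Q z' c') /\
  lsum Prc Cs = lsum (pmf pi) Lz.
Proof. induction Lz as [|z0 Lz IH]; intros Hn H.
  - exists []. split. constructor. split. intros c; split; [intros []|]. intros (z' & c' & [] & _). reflexivity.
  - inversion Hn; subst. destruct (H z0 (or_introl eq_refl)) as [Cs0 (N0 & M0 & S0)].
    destruct IH as [Cs1 (N1 & M1 & S1)]; auto. intros; apply H; simpl; auto.
    exists (map (cons (a, pi, z0)) Cs0 ++ Cs1). split; [|split].
    + apply NoDup_app; auto. apply FinFun.Injective_map_NoDup; auto. intros x y E; inversion E; auto.
      intros c Hc Hc1. apply in_map_iff in Hc. destruct Hc as [c0 [<- _]]. apply M1 in Hc1.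
      destruct Hc1 as (z' & c' & Hz' & E & _). inversion E; subst. auto.
    + intros c. rewrite in_app_iff, in_map_iff, M1. split.
      * intros [[c0 [<- Hc0]]|(z' & c' & Hz' & E & Hm)].
        -- exists z0, c0. split; simpl; auto. split; auto. apply M0; auto.
        -- exists z', c'. split; simpl; auto.
      * intros (z' & c' & [<-|Hz'] & E & Hm).
        -- left. exists c'. split; auto. apply M0; auto.
        -- right. exists z', c'. auto.
    + rewrite lsum_app, lsum_map, lsum_cons, S1.
      rewrite (lsum_ext_in (fun c => Prc ((a, pi, z0) :: c)) (fun c => pmf pi z0 * Prc c)) by (intros; apply Prc_cons).
      rewrite lsum_scal. transitivity (pmf pi z0 * 1 + lsum (pmf pi) Lz); [|ring]. f_equal. f_equal. exact S0. Qed.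

Lemma comp_list {A} (Q : pts A) : detp Q -> forall n z, (forall c, valid Q z c -> (length c <= n)%nat) ->
  exists Cs, NoDup Cs /\ (forall c, maximal Q z c <-> In c Cs) /\ lsum Prc Cs = 1.
Proof. intros Hd n. induction n as [|n IH]; intros z Hb.
  - destruct (classic (exists a pi, trans Q z a pi)) as [[a [pi Ht]]|Hno].
    + exfalso. destruct (fdist_pos pi) as [z' [_ Hz']].
      assert (valid Q z [(a, pi, z')]) by (simpl; auto). apply Hb in H. simpl in H. inversion H.
    + exists [[]]. split. constructor; auto. constructor. split.
      intros c. rewrite maximal_nil by auto. simpl. split; [intros ->; auto| intros [<-|[]]; auto].
      rewrite lsum_cons, lsum_nil; simpl; ring.
  - destruct (classic (exists a pi, trans Q z a pi)) as [[a [pi Ht]]|Hno].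
    + set (Lz := filter (fun z' => if Rlt_dec 0 (pmf pi z') then true else false) (fsupp pi)).
      assert (HLz : forall z', In z' Lz <-> In z' (fsupp pi) /\ 0 < pmf pi z').
      { intros z'. unfold Lz. rewrite filter_In. destruct Rlt_dec; split; intros [? ?]; auto; try discriminate; tauto. }
      destruct (build_list Q a pi Lz) as [Cs (N & M & S)].
      * apply NoDup_filter, fsupp_nodup.
      * intros z' Hz'. apply IH. intros c Hc. apply HLz in Hz'.
        assert (valid Q z ((a, pi, z') :: c)) by (simpl; tauto). apply Hb in H. simpl in H. lia.
      * exists Cs. split; auto. split.
        -- intros c. rewrite M, (maximal_cons Q z a pi c Hd Ht). split.
           ++ intros (z' & c' & E & Hp & Hm). exists z', c'. split; auto. apply HLz. split; auto.
              apply fsupp_spec. lra.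
           ++ intros (z' & c' & Hz' & E & Hm). apply HLz in Hz'. exists z', c'. tauto.
        -- rewrite S. rewrite <- (pmf_sum pi). unfold Lz. clear.
           induction (fsupp pi) as [|x l IHl]. reflexivity. simpl. destruct Rlt_dec.
           ++ rewrite !lsum_cons, IHl; auto.
           ++ rewrite lsum_cons, IHl. pose proof (pmf_nonneg pi x). lra.
    + exists [[]]. split. constructor; auto. constructor. split.
      intros c. rewrite maximal_nil by auto. simpl. split; [intros ->; auto| intros [<-|[]]; auto].
      rewrite lsum_cons, lsum_nil; simpl; ring.
Qed.
Lemma fsum_list {X} (Pr : X -> Prop) (f : X -> R) l : NoDup l -> (forall x, In x l <-> Pr x) -> fsum Pr f = lsum f l.
Proof. intros Hn Hl. unfold fsum. destruct excluded_middle_informative as [H|H].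
  - destruct (constructive_indefinite_description _ H) as [l' [Hn' Hl']]; simpl.
    apply lsum_perm. apply NoDup_Permutation; auto. intros x; rewrite Hl', Hl; tauto.
  - exfalso; apply H; eauto. Qed.

Lemma fsum_ext {X} (P1 P2 : X -> Prop) (f : X -> R) : (forall x, P1 x <-> P2 x) -> fsum P1 f = fsum P2 f.
Proof. intros H. assert (P1 = P2) by (apply functional_extensionality; intros; apply propositional_extensionality; auto).
  subst; auto. Qed.

Definition dec (Q : Prop) : bool := if excluded_middle_informative Q then true else false.
Lemma dec_true (Q : Prop) : dec Q = true <-> Q.
Proof. unfold dec; destruct excluded_middle_informative; split; auto; discriminate. Qed.

Lemma lsum_filter_indic {X} (f : X -> R) (Q : X -> Prop) l :
  lsum f (filter (fun x => dec (Q x)) l) = lsum (fun x => f x * indic (Q x)) l.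
Proof. induction l; simpl. rewrite !lsum_nil; auto. rewrite lsum_cons. unfold dec at 1. destruct excluded_middle_informative.
  - rewrite lsum_cons, IHl, indic_T; auto; ring.
  - rewrite IHl, indic_F; auto; ring. Qed.

Lemma res_valid {A} (P : pts A) u (Z : resolution P u) : forall c z, valid (rpts Z) z c ->
  exists c'', valid P (corr Z z) c'' /\ length c'' = length c.
Proof. induction c as [|[[a pi] z'] c IH]; intros z Hv.
  - exists []; simpl; auto.
  - destruct Hv as (Ht & Hp & Hv). destruct (r_match Z _ _ _ Ht) as [pi' [Ht' Hpi]].
    destruct (IH z' Hv) as [c'' [Hv'' Hl]]. exists ((a, pi', corr Z z') :: c''). simpl. rewrite <- Hpi. auto. Qed.

Lemma res_comps {A} (P : pts A) u (Z : resolution P u) : finite_proc P u ->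
  exists Cs, NoDup Cs /\ (forall c, maximal (rpts Z) (rinit Z) c <-> In c Cs) /\ lsum Prc Cs = 1.
Proof. intros [N HN]. apply (comp_list (rpts Z) (r_det Z) N). intros c Hc.
  destruct (res_valid P u Z c _ Hc) as [c'' [Hv Hl]]. rewrite r_corr_init in Hv. rewrite <- Hl; auto. Qed.

Definition deq {X} (x y : X) : {x = y} + {x <> y} := excluded_middle_informative (x = y).

Lemma TD_formula {A} (P : pts A) u (Z : resolution P u) Cs :
  NoDup Cs -> (forall c, maximal (rpts Z) (rinit Z) c <-> In c Cs) ->
  forall alpha, TD Z alpha = lsum (fun c => Prc c * indic (trace c = alpha)) Cs.
Proof. intros Hn Hm alpha. unfold TD. rewrite (fsum_list _ _ (filter (fun c => dec (trace c = alpha)) Cs)).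
  apply lsum_filter_indic. apply NoDup_filter; auto.
  intros c. rewrite filter_In, dec_true. unfold Cmax. rewrite Hm. tauto. Qed.

Lemma TD_fpd {A} (P : pts A) u (Z : resolution P u) Cs :
  NoDup Cs -> (forall c, maximal (rpts Z) (rinit Z) c <-> In c Cs) -> lsum Prc Cs = 1 ->
  fpd (TD Z) (nodup deq (map trace Cs)).
Proof. intros Hn Hm Hs. pose proof (TD_formula P u Z Cs Hn Hm) as HT. split; [|split; [|split]].
  - apply NoDup_nodup.
  - intros x; rewrite HT. apply lsum_nonneg. intros c _. pose proof (Prc_nonneg c). pose proof (indic_01 (trace c = x)).
    apply Rmult_le_pos; lra.
  - intros x Hx. rewrite HT. rewrite (lsum_ext_in _ (fun _ => 0)). apply lsum_const0.
    intros c Hc. rewrite indic_F. ring. intros E. apply Hx. apply nodup_In. rewrite <- E. apply in_map; auto.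
  - rewrite (lsum_ext_in _ (fun x => lsum (fun c => Prc c * indic (trace c = x)) Cs)) by (intros; apply HT).
    rewrite lsum_swap. rewrite <- Hs. apply lsum_ext_in. intros c Hc.
    rewrite lsum_scal. rewrite (lsum_ext_in _ (fun x => 1 * indic (x = trace c))).
    rewrite lsum_indic_in. ring. apply NoDup_nodup. apply nodup_In, in_map; auto.
    intros; rewrite indic_sym; ring. Qed.
Fixpoint tr {A} (phi : tform A) : list A :=
  match phi with TTop => [] | TDiam a phi' => a :: tr phi' end.
Fixpoint fm {A} (l : list A) : tform A :=
  match l with [] => TTop | a :: l' => TDiam a (fm l') end.
Lemma tr_fm {A} (l : list A) : tr (fm l) = l.
Proof. induction l; simpl; congruence. Qed.
Lemma fm_tr {A} (phi : tform A) : fm (tr phi) = phi.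
Proof. induction phi; simpl; congruence. Qed.
Lemma fm_inj {A} : FinFun.Injective (@fm A).
Proof. intros x y E. rewrite <- (tr_fm x), <- (tr_fm y), E; auto. Qed.
Lemma tr_inj {A} : FinFun.Injective (@tr A).
Proof. intros x y E. rewrite <- (fm_tr x), <- (fm_tr y), E; auto. Qed.

Lemma csat_tr {A S} (c : steps A S) phi : (csat c phi /\ length c = depth phi) <-> trace c = tr phi.
Proof. revert c. induction phi as [|a phi IH]; intros c; simpl.
  - destruct c; simpl; split; intros; try tauto; try discriminate. destruct H; discriminate.
  - destruct c as [|[[a' pi] z] c]; simpl. split; [tauto| discriminate].
    unfold trace in *. simpl. specialize (IH c). split.
    + intros [[-> Hc] Hl]. f_equal. apply IH. split; auto.
    + intros E. inversion E; subst. destruct IH as [_ IH]. destruct (IH H1). auto. Qed.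

Lemma ldist_gen_in {A} (l : list (R * tform A)) r phi : NoDup (map snd l) -> In (r, phi) l ->
  lsum (fun p => fst p * indic (snd p = phi)) l = r.
Proof. induction l as [|[r0 phi0] l IH]; simpl; intros Hn Hin; [destruct Hin|]. inversion Hn; subst.
  rewrite lsum_cons. simpl. destruct Hin as [E|Hin].
  - inversion E; subst. rewrite indic_T by auto. rewrite (lsum_ext_in _ (fun _ => 0)). rewrite lsum_const0; ring.
    intros p Hp. rewrite indic_F. ring. intros E'. apply H1. rewrite <- E'. apply in_map; auto.
  - rewrite IH; auto. rewrite indic_F. ring. intros ->. apply H1. change phi with (snd (r, phi)). apply in_map; auto. Qed.

Lemma ldist_gen_out {A} (l : list (R * tform A)) phi : ~ In phi (map snd l) ->
  lsum (fun p => fst p * indic (snd p = phi)) l = 0.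
Proof. intros H. rewrite (lsum_ext_in _ (fun _ => 0)). apply lsum_const0.
  intros p Hp. rewrite indic_F. ring. intros E. apply H. rewrite <- E. apply in_map; auto. Qed.

Lemma ldist_fpd {A} (Psi : ldform A) : fpd (ldist Psi) (map snd (lterms Psi)).
Proof. split; [apply lterms_nodup|split;[|split]].
  - intros x. unfold ldist. apply lsum_nonneg. intros p Hp. pose proof (lterms_pos Psi p Hp). pose proof (indic_01 (snd p = x)).
    apply Rmult_le_pos; lra.
  - intros x Hx. apply ldist_gen_out; auto.
  - rewrite lsum_map. rewrite <- (lterms_sum Psi). apply lsum_ext_in. intros [r phi] Hp. simpl.
    unfold ldist. apply ldist_gen_in; auto. apply lterms_nodup. Qed.

Lemma fpd_tr {A} (mu : list A -> R) T : fpd mu T -> fpd (fun phi => mu (tr phi)) (map fm T).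
Proof. intros (Hn & Hp & H0 & Hs). split; [|split;[|split]].
  - apply FinFun.Injective_map_NoDup; auto. apply fm_inj.
  - intros; apply Hp.
  - intros phi Hphi. apply H0. intros Hin. apply Hphi. rewrite <- (fm_tr phi). apply in_map; auto.
  - rewrite lsum_map. rewrite <- Hs. apply lsum_ext_in. intros; rewrite tr_fm; auto. Qed.

Definition Rep {A} {P : pts A} {u : st P} (Z : resolution P u) (Psi : ldform A) : Prop :=
  forall phi, ldist Psi phi = TD Z (tr phi).

Lemma Dl_DT {A} (P : pts A) u v (Z1 : resolution P u) (Z2 : resolution P v) Psi1 Psi2 :
  finite_proc P u -> finite_proc P v -> Rep Z1 Psi1 -> Rep Z2 Psi2 -> Dl Psi1 Psi2 = DT Z1 Z2.
Proof. intros Fu Fv R1 R2.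
  destruct (res_comps P u Z1 Fu) as [Cs1 (N1 & M1 & S1)].
  destruct (res_comps P v Z2 Fv) as [Cs2 (N2 & M2 & S2)].
  pose proof (TD_fpd P u Z1 Cs1 N1 M1 S1) as H1. pose proof (TD_fpd P v Z2 Cs2 N2 M2 S2) as H2.
  set (T12 := nodup deq (nodup deq (map trace Cs1) ++ nodup deq (map trace Cs2))).
  assert (NT : NoDup T12) by apply NoDup_nodup.
  assert (G1 : fpd (TD Z1) T12). { apply (fpd_incl _ _ _ H1 NT). intros x Hx; apply nodup_In, in_app_iff; auto. }
  assert (G2 : fpd (TD Z2) T12). { apply (fpd_incl _ _ _ H2 NT). intros x Hx; apply nodup_In, in_app_iff; auto. }
  unfold DT. change (kantorovich dtr (TD Z1) (TD Z2)) with (kantorovich dd (TD Z1) (TD Z2)).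
  rewrite (kant_tv _ _ T12) by auto.
  unfold Dl. change (kantorovich dform (ldist Psi1) (ldist Psi2)) with (kantorovich dd (ldist Psi1) (ldist Psi2)).
  assert (E1 : ldist Psi1 = fun phi => TD Z1 (tr phi)) by (apply functional_extensionality; apply R1).
  assert (E2 : ldist Psi2 = fun phi => TD Z2 (tr phi)) by (apply functional_extensionality; apply R2).
  rewrite E1, E2. rewrite (kant_tv _ _ (map fm T12)) by (apply fpd_tr; auto).
  rewrite lsum_map. f_equal. apply lsum_ext_in. intros; rewrite tr_fm; auto. Qed.

Lemma Dl_props {A} (Psi1 Psi2 Psi3 : ldform A) :
  0 <= Dl Psi1 Psi2 <= 1 /\ Dl Psi1 Psi1 = 0 /\ Dl Psi1 Psi3 <= Dl Psi1 Psi2 + Dl Psi2 Psi3.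
Proof. set (L := nodup deq (map snd (lterms Psi1) ++ map snd (lterms Psi2) ++ map snd (lterms Psi3))).
  assert (NL : NoDup L) by apply NoDup_nodup.
  assert (G1 : fpd (ldist Psi1) L). { apply (fpd_incl _ _ _ (ldist_fpd Psi1) NL). intros x Hx; apply nodup_In; rewrite !in_app_iff; auto. }
  assert (G2 : fpd (ldist Psi2) L). { apply (fpd_incl _ _ _ (ldist_fpd Psi2) NL). intros x Hx; apply nodup_In; rewrite !in_app_iff; auto. }
  assert (G3 : fpd (ldist Psi3) L). { apply (fpd_incl _ _ _ (ldist_fpd Psi3) NL). intros x Hx; apply nodup_In; rewrite !in_app_iff; auto. }
  unfold Dl. change (@dform A) with (@dd (tform A)). split; [|split].
  - apply (kant_01 _ _ L); auto.
  - apply (kant_self _ L); auto.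
  - apply (kant_tri _ _ _ L); auto. Qed.

Lemma Rep_exists {A} (P : pts A) u (Z : resolution P u) : finite_proc P u ->
  exists Psi, Rep Z Psi /\ Lset P u Psi.
Proof. intros Fu. destruct (res_comps P u Z Fu) as [Cs (N & M & S)].
  set (T := nodup deq (map trace Cs)).
  pose proof (TD_fpd P u Z Cs N M S) as HT. fold T in HT. pose proof HT as (HTn & HTp & HT0 & HTs).
  set (filt := filter (fun a => dec (0 < TD Z a)) T).
  set (terms := map (fun a => (TD Z a, fm a)) filt).
  assert (H1 : NoDup (map snd terms)).
  { unfold terms. rewrite map_map. simpl. apply FinFun.Injective_map_NoDup. apply fm_inj. apply NoDup_filter; auto. }
  assert (H2 : forall p, In p terms -> 0 < fst p <= 1).
  { intros p Hp. unfold terms in Hp. apply in_map_iff in Hp. destruct Hp as [a [<- Ha]].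
    unfold filt in Ha. apply filter_In in Ha. destruct Ha as [_ Ha]. cbv beta in Ha. rewrite dec_true in Ha. simpl. split; auto.
    eapply single_le1; eauto. }
  assert (H3 : lsum fst terms = 1).
  { unfold terms. rewrite lsum_map. simpl. unfold filt. rewrite (lsum_filter_indic (fun a => TD Z a)). rewrite <- HTs.
    apply lsum_ext_in. intros a _. destruct (classic (0 < TD Z a)). rewrite indic_T; auto; ring.
    rewrite indic_F by auto. pose proof (HTp a). assert (E0 : TD Z a = 0) by lra. rewrite E0; ring. }
  exists {| lterms := terms; lterms_nodup := H1; lterms_pos := H2; lterms_sum := H3 |}. split.
  - intros phi. unfold ldist. simpl. unfold terms. rewrite lsum_map. simpl.
    rewrite (lsum_ext_in _ (fun a => TD Z a * indic (a = tr phi))).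
    2:{ intros a _. f_equal. apply indic_iff. split; intros E. rewrite <- E, tr_fm; auto. rewrite E, fm_tr; auto. }
    destruct (classic (In (tr phi) filt)) as [Hin|Hout].
    + apply lsum_indic_in; auto. apply NoDup_filter; auto.
    + rewrite lsum_indic_out by auto. symmetry. destruct (classic (In (tr phi) T)) as [HinT|HoutT].
      * assert (~ (0 < TD Z (tr phi))). { intros Hp. apply Hout. unfold filt. apply filter_In. split; auto. apply dec_true; auto. }
        pose proof (HTp (tr phi)). lra.
      * apply HT0; auto.
  - exists Z. intros p Hp. simpl in Hp. unfold terms in Hp. apply in_map_iff in Hp. destruct Hp as [a [<- Ha]]. simpl.
    unfold TD. apply fsum_ext. intros c. unfold Cmax. rewrite csat_tr, tr_fm. tauto. Qed.

Lemma Lset_Rep {A} (P : pts A) u (Psi : ldform A) : finite_proc P u -> Lset P u Psi ->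
  exists Z : resolution P u, Rep Z Psi.
Proof. intros Fu [Z HZ]. exists Z. destruct (res_comps P u Z Fu) as [Cs (N & M & S)].
  pose proof (TD_fpd P u Z Cs N M S) as HT.
  assert (Hin : forall p, In p (lterms Psi) -> TD Z (tr (snd p)) = fst p).
  { intros p Hp. rewrite <- (HZ p Hp). unfold TD. apply fsum_ext. intros c. unfold Cmax. rewrite csat_tr. tauto. }
  intros phi. destruct (classic (In phi (map snd (lterms Psi)))) as [Hi|Ho].
  - apply in_map_iff in Hi. destruct Hi as [[r phi0] [E Hp]]. simpl in E; subst phi0.
    unfold ldist. rewrite (ldist_gen_in _ r) by (auto; apply lterms_nodup). pose proof (Hin _ Hp) as Hx; simpl in Hx; auto.
  - unfold ldist. rewrite ldist_gen_out by auto.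
    set (L' := tr phi :: map (fun p => tr (snd p)) (lterms Psi)).
    assert (NL : NoDup L').
    { constructor.
      - intros Hx. apply in_map_iff in Hx. destruct Hx as [p [E Hp]]. apply tr_inj in E. apply Ho. rewrite <- E. apply in_map; auto.
      - rewrite <- (map_map snd tr). apply FinFun.Injective_map_NoDup. apply tr_inj. apply lterms_nodup. }
    pose proof (lsum_le_fpd _ _ L' HT NL) as Hle. unfold L' in Hle. rewrite lsum_cons, lsum_map in Hle.
    rewrite (lsum_ext_in _ fst) in Hle by auto. rewrite lterms_sum in Hle.
    pose proof (proj1 (proj2 HT) (tr phi)). lra. Qed.
Lemma DlSet_lb {A} (P : pts A) u Psi Psi' : Lset P u Psi' -> DlSet Psi (Lset P u) <= Dl Psi Psi'.
Proof. intros H. unfold DlSet. apply Rinf_lb. intros y [Q [_ ->]]. apply (Dl_props Psi Q Q). exists Psi'; auto. Qed.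

Lemma DlSet_01 {A} (P : pts A) u Psi : 0 <= DlSet Psi (Lset P u) <= 1.
Proof. unfold DlSet. apply Rinf_01. intros y [Q [_ ->]]. apply (Dl_props Psi Q Q). Qed.

Lemma DlSet_glb {A} (P : pts A) u Psi m : (forall Psi', Lset P u Psi' -> m <= Dl Psi Psi') -> m <= 1 ->
  m <= DlSet Psi (Lset P u).
Proof. intros H H1. unfold DlSet. apply Rinf_glb; auto. intros y [Q [HQ ->]]. auto. Qed.

Lemma DT_01 {A} (P : pts A) u v (Z1 : resolution P u) (Z2 : resolution P v) :
  finite_proc P u -> finite_proc P v -> 0 <= DT Z1 Z2 <= 1.
Proof. intros Fu Fv. destruct (Rep_exists P u Z1 Fu) as [Psi1 [R1 _]]. destruct (Rep_exists P v Z2 Fv) as [Psi2 [R2 _]].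
  rewrite <- (Dl_DT P u v Z1 Z2 Psi1 Psi2) by auto. apply (Dl_props Psi1 Psi2 Psi2). Qed.

Lemma i_eq {A} (P : pts A) u v (Z1 : resolution P u) Psi1 : finite_proc P u -> finite_proc P v -> Rep Z1 Psi1 ->
  Rinf (fun x => exists Z2 : resolution P v, x = DT Z1 Z2) = DlSet Psi1 (Lset P v).
Proof. intros Fu Fv R1.
  assert (B : forall y, (exists Z2 : resolution P v, y = DT Z1 Z2) -> 0 <= y <= 1).
  { intros y [Z2 ->]. apply DT_01; auto. }
  apply Rle_antisym.
  - apply DlSet_glb. intros Psi' HL. destruct (Lset_Rep P v Psi' Fv HL) as [Z2 R2].
    rewrite (Dl_DT P u v Z1 Z2 Psi1 Psi') by auto. apply Rinf_lb. intros y Hy; apply B; auto. exists Z2; auto.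
    apply Rinf_01; auto.
  - apply Rinf_glb. intros y [Z2 ->]. destruct (Rep_exists P v Z2 Fv) as [Psi2 [R2 L2]].
    rewrite <- (Dl_DT P u v Z1 Z2 Psi1 Psi2) by auto. apply DlSet_lb; auto.
    apply DlSet_01. Qed.

Lemma key {A} (P : pts A) u v (Psi : ldform A) : finite_proc P u -> finite_proc P v ->
  DlSet Psi (Lset P v) <= DlSet Psi (Lset P u) +
    Rsup (fun x => exists Z1 : resolution P u, x = Rinf (fun y => exists Z2 : resolution P v, y = DT Z1 Z2)).
Proof. intros Fu Fv. set (D := Rsup _).
  assert (Bd : forall x, (exists Z1 : resolution P u, x = Rinf (fun y => exists Z2 : resolution P v, y = DT Z1 Z2)) -> 0 <= x <= 1).
  { intros x [Z1 ->]. apply Rinf_01. intros y [Z2 ->]. apply DT_01; auto. }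
  assert (D0 : 0 <= D) by (apply Rsup_nonneg; intros; apply Bd; auto).
  pose proof (DlSet_01 P v Psi).
  enough (DlSet Psi (Lset P v) - D <= DlSet Psi (Lset P u)) by lra.
  apply DlSet_glb; [|lra]. intros Psi' HL. destruct (Lset_Rep P u Psi' Fu HL) as [Z1 R1].
  assert (I1 : Rinf (fun y => exists Z2 : resolution P v, y = DT Z1 Z2) <= D).
  { apply Rsup_ub. exists 1. intros x Hx; apply Bd; auto. exists Z1; auto. }
  rewrite (i_eq P u v Z1 Psi') in I1 by auto.
  assert (DlSet Psi (Lset P v) - Dl Psi Psi' <= DlSet Psi' (Lset P v)).
  { apply DlSet_glb.
    - intros Q HQ. pose proof (DlSet_lb P v Psi Q HQ). pose proof (proj2 (proj2 (Dl_props Psi Psi' Q))). lra.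
    - pose proof (proj1 (Dl_props Psi Psi' Psi')). lra. }
  lra. Qed.

Theorem theorem20 (A : Type) (P : pts A) (s t : st P) :
  image_finite P s -> finite_proc P s ->
  image_finite P t -> finite_proc P t ->
  dT P s t = Rsup (fun v => exists Psi : ldform A, v = Rabs (sem P Psi s - sem P Psi t)).
Proof. intros _ Fs _ Ft. unfold dT, hausdorff.
  set (D1 := Rsup (fun v => exists x : resolution P s, v = Rinf (fun u => exists y : resolution P t, u = DT x y))).
  set (D2 := Rsup (fun v => exists y : resolution P t, v = Rinf (fun u => exists x : resolution P s, u = DT y x))).
  set (ER := fun v => exists Psi : ldform A, v = Rabs (sem P Psi s - sem P Psi t)).
  assert (ERb : forall x, ER x -> 0 <= x <= 1).
  { intros x [Psi ->]. unfold sem. pose proof (DlSet_01 P s Psi). pose proof (DlSet_01 P t Psi).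
    split. apply Rabs_pos. unfold Rabs; destruct Rcase_abs; lra. }
  assert (ERbd : bound ER) by (exists 1; intros x Hx; apply ERb; auto).
  assert (R0 : 0 <= Rsup ER) by (apply Rsup_nonneg; intros; apply ERb; auto).
  assert (D10 : 0 <= D1).
  { apply Rsup_nonneg. intros x [Z1 ->]. apply Rinf_01. intros y [Z2 ->]. apply DT_01; auto. }
  apply Rle_antisym.
  - apply Rmax_lub.
    + apply Rsup_le; auto. intros x [Z1 ->]. destruct (Rep_exists P s Z1 Fs) as [Psi1 [R1 L1]].
      rewrite (i_eq P s t Z1 Psi1) by auto.
      assert (E0 : DlSet Psi1 (Lset P s) = 0).
      { pose proof (DlSet_lb P s Psi1 Psi1 L1). pose proof (proj1 (proj2 (Dl_props Psi1 Psi1 Psi1))).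
        pose proof (DlSet_01 P s Psi1). lra. }
      apply Rsup_ub; auto. exists Psi1. unfold sem. rewrite E0. pose proof (DlSet_01 P t Psi1).
      unfold Rabs; destruct Rcase_abs; lra.
    + apply Rsup_le; auto. intros x [Z2 ->]. destruct (Rep_exists P t Z2 Ft) as [Psi2 [R2 L2]].
      rewrite (i_eq P t s Z2 Psi2) by auto.
      assert (E0 : DlSet Psi2 (Lset P t) = 0).
      { pose proof (DlSet_lb P t Psi2 Psi2 L2). pose proof (proj1 (proj2 (Dl_props Psi2 Psi2 Psi2))).
        pose proof (DlSet_01 P t Psi2). lra. }
      apply Rsup_ub; auto. exists Psi2. unfold sem. rewrite E0. pose proof (DlSet_01 P s Psi2).
      unfold Rabs; destruct Rcase_abs; lra.
  - apply Rsup_le. 2:{ pose proof (Rmax_l D1 D2). lra. }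
    intros x [Psi ->]. unfold sem.
    pose proof (key P s t Psi Fs Ft) as K1. pose proof (key P t s Psi Ft Fs) as K2.
    fold D1 in K1. fold D2 in K2. pose proof (Rmax_l D1 D2). pose proof (Rmax_r D1 D2).
    unfold Rabs; destruct Rcase_abs; lra.
Qed.
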